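(* If the set of all Diophantine equations which have a solution in non-negative integers is not recursive, then the set of all Diophantine equations which have at most finitely many solutions in non-negative integers is not recursively enumerable.
   Context: A Diophantine equation is an equation $D(x_1,\ldots,x_n)=0$ with $D\in\mathbb Z[x_1,\ldots,x_n]$; such equations are coded as natural numbers so that recursiveness and recursive enumerability of sets of them make sense. Solutions in non-negative integers are tuples in $\mathbb N^n$, $\mathbb N=\{0,1,2,\ldots\}$. *)

(* Defs.v *)
From Stdlib Require Import Arith ZArith List Cantor.
Import ListNotations.

(* Arguments are passed as a list of naturals; missing arguments read as 0
   (a standard, harmless convention: it yields exactly the partial recursive
   functions). *)
Inductive code : Type :=
| c_zero : code
| c_succ : code
| c_proj : nat -> code
| c_comp : code -> list code -> code
| c_prec : code -> code -> code
| c_mu   : code -> code.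

Inductive eval : code -> list nat -> nat -> Prop :=
| e_zero l : eval c_zero l 0
| e_succ l : eval c_succ l (S (hd 0 l))
| e_proj i l : eval (c_proj i) l (nth i l 0)
| e_comp f gs l ys z :
    Forall2 (fun g y => eval g l y) gs ys -> eval f ys z ->
    eval (c_comp f gs) l z
| e_prec0 f g l z : eval f l z -> eval (c_prec f g) (0 :: l) z
| e_precS f g n l r z :
    eval (c_prec f g) (n :: l) r -> eval g (n :: r :: l) z ->
    eval (c_prec f g) (S n :: l) z
| e_prec_nil f g z : eval (c_prec f g) [0] z -> eval (c_prec f g) [] z
| e_mu f l y :
    eval f (y :: l) 0 ->
    (forall y', y' < y -> exists v, v <> 0 /\ eval f (y' :: l) v) ->
    eval (c_mu f) l y.

Definition recursive (P : nat -> Prop) : Prop :=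
  exists c : code, forall n,
    (P n -> eval c [n] 1) /\ (~ P n -> eval c [n] 0).

Definition recursively_enumerable (P : nat -> Prop) : Prop :=
  exists c : code, forall n, P n <-> exists y, eval c [n] y.

(* D(x_1,...,x_n) = sum of monomials  a * x_1^e_1 * ... * x_n^e_n.
   A monomial is (a, [e_1; ...; e_k]); missing exponents are 0 and exponents
   beyond position n are ignored. *)
Record dioph_eq : Type := mkDioph {
  nvars : nat;
  monos : list (Z * list nat)
}.

Fixpoint mono_val (e : list nat) (x : list nat) : Z :=
  match x with
  | [] => 1%Z
  | xi :: x' => Z.mul (Z.pow (Z.of_nat xi) (Z.of_nat (hd 0%nat e))) (mono_val (tl e) x')
  end.

(* Value of D at x (x is meant to have length nvars D). *)
Definition poly_val (D : dioph_eq) (x : list nat) : Z :=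
  fold_right (fun m acc => (fst m * mono_val (snd m) x + acc)%Z) 0%Z (monos D).

Definition is_solution (D : dioph_eq) (x : list nat) : Prop :=
  length x = nvars D /\ poly_val D x = 0%Z.

Definition has_solution (D : dioph_eq) : Prop :=
  exists x, is_solution D x.

Definition finitely_many_solutions (D : dioph_eq) : Prop :=
  exists L : list (list nat), forall x, is_solution D x -> In x L.

(* Goedel numbering: a (surjective, evidently computable) decoding of naturals
   into Diophantine equations, built from the Cantor pairing function. *)
Fixpoint decode_list_aux (len r : nat) : list nat :=
  match len with
  | 0 => []
  | S len' => let (a, r') := Cantor.of_nat r in a :: decode_list_aux len' r'
  end.

Definition decode_list (c : nat) : list nat :=
  let (len, r) := Cantor.of_nat c in decode_list_aux len r.

Definition decode_Z (c : nat) : Z :=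
  let (s, m) := Cantor.of_nat c in
  match s with 0 => Z.of_nat m | _ => (- Z.of_nat m)%Z end.

Definition decode_mono (c : nat) : Z * list nat :=
  let (a, b) := Cantor.of_nat c in (decode_Z a, decode_list b).

Definition decode_eq (c : nat) : dioph_eq :=
  let (n, r) := Cantor.of_nat c in mkDioph n (map decode_mono (decode_list r)).

(* Main.v *)
Require Import Defs.
From Stdlib Require Import Arith ZArith List Cantor Lia Classical.
Import ListNotations.


Definition agree (k : nat) (l l' : list nat) : Prop :=
  forall i, i < k -> nth i l 0 = nth i l' 0.

Lemma agree_mono k k' l l' : k' <= k -> agree k l l' -> agree k' l l'.
Proof. intros H A i Hi. apply A. lia. Qed.

Lemma agree_cons2 k a b l l' : agree (k - 2) l l' -> agree k (a :: b :: l) (a :: b :: l').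
Proof. intros A [|[|i]] Hi; simpl; auto. apply A. lia. Qed.

Lemma agree_cons1 k a l l' : agree (k - 1) l l' -> agree k (a :: l) (a :: l').
Proof. intros A [|i] Hi; simpl; auto. apply A. lia. Qed.

Lemma nat_rect_ext (a a' : nat) f g n : a = a' -> (forall j r, f j r = g j r) ->
  nat_rect (fun _ => nat) a f n = nat_rect (fun _ => nat) a' g n.
Proof. intros -> H. induction n; simpl; congruence. Qed.

Lemma prec_eval f g F G :
  (forall l, eval f l (F l)) -> (forall l, eval g l (G l)) ->
  forall n l, eval (c_prec f g) (n :: l)
     (nat_rect (fun _ => nat) (F l) (fun j r => G (j :: r :: l)) n).
Proof.
  intros Hf Hg n l. induction n; simpl.
  - constructor. apply Hf.
  - eapply e_precS. apply IHn. apply Hg.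
Qed.

Definition ADDc := c_prec (c_proj 0) (c_comp c_succ [c_proj 1]).
Lemma ADDc_ok l : eval ADDc l (nth 0 l 0 + nth 1 l 0).
Proof.
  assert (H : forall x l, eval ADDc (x :: l) (x + nth 0 l 0)).
  { intros x l0.
    replace (x + nth 0 l0 0) with
      (nat_rect (fun _ => nat) (nth 0 l0 0) (fun j r => S (nth 1 (j :: r :: l0) 0)) x).
    - apply (prec_eval _ _ (fun l => nth 0 l 0) (fun l => S (nth 1 l 0))).
      + intros; constructor.
      + intros. econstructor. repeat constructor. constructor.
    - induction x; simpl in *; auto. }
  destruct l as [|x l]. apply e_prec_nil. apply (H 0 []). apply H.
Qed.

Definition MULc := c_prec c_zero (c_comp ADDc [c_proj 1; c_proj 2]).
Lemma MULc_ok l : eval MULc l (nth 0 l 0 * nth 1 l 0).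
Proof.
  assert (H : forall x l, eval MULc (x :: l) (x * nth 0 l 0)).
  { intros x l0.
    replace (x * nth 0 l0 0) with
      (nat_rect (fun _ => nat) 0 (fun j r => nth 1 (j :: r :: l0) 0 + nth 2 (j :: r :: l0) 0) x).
    - apply (prec_eval _ _ (fun _ => 0) (fun l => nth 1 l 0 + nth 2 l 0)). intros; constructor. intros. econstructor. repeat constructor. apply ADDc_ok.
    - induction x; simpl in *; auto. rewrite IHx. lia. }
  destruct l as [|x l].
  - apply e_prec_nil. apply (H 0 []).
  - apply H.
Qed.

Definition PREDc := c_prec c_zero (c_proj 0).
Lemma PREDc_ok l : eval PREDc l (pred (nth 0 l 0)).
Proof.
  assert (H : forall x l, eval PREDc (x :: l) (pred x)).
  { intros x l0. replace (pred x) with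
      (nat_rect (fun _ => nat) 0 (fun j r => nth 0 (j :: r :: l0) 0) x).
    - apply (prec_eval _ _ (fun _ => 0) (fun l => nth 0 l 0)); intros; constructor.
    - destruct x; reflexivity. }
  destruct l as [|x l]. apply e_prec_nil. apply (H 0 []). apply H.
Qed.

Definition SUBc := c_comp (c_prec (c_proj 0) (c_comp PREDc [c_proj 1])) [c_proj 1; c_proj 0].
Lemma SUBc_ok l : eval SUBc l (nth 0 l 0 - nth 1 l 0).
Proof.
  econstructor. repeat constructor.
  replace (nth 0 l 0 - nth 1 l 0) with
    (nat_rect (fun _ => nat) (nth 0 [nth 0 l 0] 0)
      (fun j r => pred (nth 0 [nth 1 (j :: r :: [nth 0 l 0]) 0] 0)) (nth 1 l 0)).
  - apply (prec_eval _ _ (fun l => nth 0 l 0) (fun l => pred (nth 0 [nth 1 l 0] 0))).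
    + intros; constructor.
    + intros. econstructor. repeat constructor. apply PREDc_ok.
  - simpl. generalize (nth 1 l 0). induction n; simpl. lia. rewrite IHn. lia.
Qed.

Inductive ex : Type :=
| Var : nat -> ex | Zro : ex | Suc : ex -> ex
| Add : ex -> ex -> ex | Mul : ex -> ex -> ex | Sub : ex -> ex -> ex
| Rec : ex -> ex -> ex -> ex
| App : ex -> exs -> ex
with exs : Type := ENil : exs | ECons : ex -> exs -> exs.

Scheme ex_mut := Induction for ex Sort Prop
with exs_mut := Induction for exs Sort Prop.
Combined Scheme ex_exs_mut from ex_mut, exs_mut.

Fixpoint den (e : ex) (l : list nat) {struct e} : nat :=
 match e with
 | Var i => nth i l 0
 | Zro => 0
 | Suc a => S (den a l)
 | Add a b => den a l + den b l
 | Mul a b => den a l * den b l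
 | Sub a b => den a l - den b l
 | Rec b i s => nat_rect (fun _ => nat) (den i l) (fun j r => den s (j :: r :: l)) (den b l)
 | App f es => den f (dens es l)
 end
with dens (es : exs) (l : list nat) {struct es} : list nat :=
 match es with ENil => [] | ECons e es => den e l :: dens es l end.

Fixpoint wd (e : ex) : nat :=
 match e with
 | Var i => S i | Zro => 0 | Suc a => wd a
 | Add a b | Mul a b | Sub a b => max (wd a) (wd b)
 | Rec b i s => max (wd b) (max (wd i) (wd s - 2))
 | App f es => wds es
 end
with wds (es : exs) : nat :=
 match es with ENil => 0 | ECons e es => max (wd e) (wds es) end.

Lemma den_agree_all :
  (forall e l l', agree (wd e) l l' -> den e l = den e l') /\
  (forall es l l', agree (wds es) l l' -> dens es l = dens es l').
Proof.
  apply ex_exs_mut; simpl; intros.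
  - apply H. lia.
  - reflexivity.
  - f_equal. apply H. auto.
  - f_equal; [apply H|apply H0]; (eapply agree_mono; [|eassumption]; lia).
  - f_equal; [apply H|apply H0]; (eapply agree_mono; [|eassumption]; lia).
  - f_equal; [apply H|apply H0]; (eapply agree_mono; [|eassumption]; lia).
  - rewrite (H l l') by (eapply agree_mono; [|eassumption]; lia). apply nat_rect_ext.
    + apply H0. eapply agree_mono; [|eassumption]; lia.
    + intros. apply H1. apply agree_cons2. eapply agree_mono; [|eassumption]; lia.
  - f_equal. apply H0. auto.
  - reflexivity.
  - f_equal; [apply H|apply H0]; (eapply agree_mono; [|eassumption]; lia).
Qed.

Lemma den_agree e l l' : agree (wd e) l l' -> den e l = den e l'.
Proof. apply den_agree_all. Qed.

Definition projs (k W : nat) : list code := map (fun i => c_proj (i + k)) (seq 0 W).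
Definition padl (k W : nat) (l : list nat) : list nat := map (fun i => nth (i + k) l 0) (seq 0 W).

Lemma projs_ok k W l : Forall2 (fun g y => eval g l y) (projs k W) (padl k W l).
Proof.
  unfold projs, padl.
  assert (G : forall st, Forall2 (fun g y => eval g l y) (map (fun i => c_proj (i + k)) (seq st W))
     (map (fun i => nth (i + k) l 0) (seq st W))).
  { induction W; intros st; simpl; constructor; auto. constructor. }
  apply G.
Qed.

Lemma padl_nth k W l i : i < W -> nth i (padl k W l) 0 = nth (i + k) l 0.
Proof.
  intros Hi. unfold padl.
  rewrite nth_indep with (d' := (fun i => nth (i + k) l 0) 0) by (rewrite length_map, length_seq; lia).
  rewrite (map_nth (fun i => nth (i + k) l 0)), seq_nth by lia. reflexivity.
Qed.

Lemma agree_padl W l : agree W (padl 0 W l) l.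
Proof. intros i Hi. rewrite padl_nth by lia. f_equal. lia. Qed.

Fixpoint cmp (e : ex) : code :=
 match e with
 | Var i => c_proj i
 | Zro => c_zero
 | Suc a => c_comp c_succ [cmp a]
 | Add a b => c_comp ADDc [cmp a; cmp b]
 | Mul a b => c_comp MULc [cmp a; cmp b]
 | Sub a b => c_comp SUBc [cmp a; cmp b]
 | Rec b i s => c_comp (c_prec (cmp i) (cmp s)) (cmp b :: projs 0 (max (wd i) (wd s - 2)))
 | App f es => c_comp (cmp f) (cmps es)
 end
with cmps (es : exs) : list code :=
 match es with ENil => [] | ECons e es => cmp e :: cmps es end.

Lemma cmp_ok_all :
  (forall e l, eval (cmp e) l (den e l)) /\
  (forall es l, Forall2 (fun g y => eval g l y) (cmps es) (dens es l)).
Proof.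
  apply ex_exs_mut.
  all: simpl; intros.
  - constructor.
  - constructor.
  - econstructor. repeat constructor. apply H. constructor.
  - econstructor. repeat constructor; auto. apply ADDc_ok.
  - econstructor. repeat constructor; auto. apply MULc_ok.
  - econstructor. repeat constructor; auto. apply SUBc_ok.
  - econstructor. constructor. apply H. apply projs_ok.
    set (W := max (wd e0) (wd e1 - 2)).
    replace (nat_rect (fun _ => nat) (den e0 l) (fun j r => den e1 (j :: r :: l)) (den e l))
      with (nat_rect (fun _ => nat) (den e0 (padl 0 W l)) (fun j r => den e1 (j :: r :: padl 0 W l)) (den e l)).
    + apply prec_eval; auto.
    + apply nat_rect_ext.
      * apply den_agree. eapply agree_mono; [|apply agree_padl]. unfold W; lia.
      * intros. apply den_agree. apply agree_cons2. eapply agree_mono; [|apply agree_padl]. unfold W; lia.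
  - econstructor. apply H0. apply H.
  - constructor.
  - constructor; auto.
Qed.

Lemma cmp_ok e l : eval (cmp e) l (den e l).
Proof. apply cmp_ok_all. Qed.


Fixpoint code_ind' (P : code -> Prop) (Hz : P c_zero) (Hs : P c_succ) (Hp : forall i, P (c_proj i))
  (Hc : forall f gs, P f -> Forall P gs -> P (c_comp f gs))
  (Hr : forall f g, P f -> P g -> P (c_prec f g)) (Hm : forall f, P f -> P (c_mu f)) (c : code) {struct c} : P c :=
  match c with
  | c_zero => Hz | c_succ => Hs | c_proj i => Hp i
  | c_comp f gs => Hc f gs (code_ind' P Hz Hs Hp Hc Hr Hm f)
      ((fix F (gs : list code) : Forall P gs :=
          match gs with [] => Forall_nil P | g :: gs' => Forall_cons g (code_ind' P Hz Hs Hp Hc Hr Hm g) (F gs') end) gs)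
  | c_prec f g => Hr f g (code_ind' P Hz Hs Hp Hc Hr Hm f) (code_ind' P Hz Hs Hp Hc Hr Hm g)
  | c_mu f => Hm f (code_ind' P Hz Hs Hp Hc Hr Hm f)
  end.

Definition enc (o : option nat) : nat := match o with Some v => S v | None => 0 end.
Definition mustep (j st t : nat) : nat :=
  match st with 0 => match t with 0 => 1 | 1 => S (S j) | _ => 0 end | _ => st end.
Definition sr (t : nat -> nat) (n : nat) : nat :=
  nat_rect (fun _ => nat) 0 (fun j st => mustep j st (t j)) n.
Definition mures (st : nat) : option nat := match st with S (S v) => Some v | _ => None end.

Fixpoint allsome (l : list (option nat)) : option (list nat) :=
  match l with
  | [] => Some []
  | o :: l' => match o, allsome l' with Some v, Some vs => Some (v :: vs) | _, _ => None end
  end.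

Fixpoint ev (s : nat) (c : code) (l : list nat) {struct c} : option nat :=
  match c with
  | c_zero => Some 0
  | c_succ => Some (S (hd 0 l))
  | c_proj i => Some (nth i l 0)
  | c_comp f gs => match allsome (map (fun g => ev s g l) gs) with Some ys => ev s f ys | None => None end
  | c_prec f g => nat_rect (fun _ => option nat) (ev s f (tl l))
       (fun j r => match r with Some r => ev s g (j :: r :: tl l) | None => None end) (hd 0 l)
  | c_mu f => mures (sr (fun j => enc (ev s f (j :: l))) s)
  end.

Fixpoint wc (c : code) : nat :=
  match c with
  | c_zero => 0 | c_succ => 1 | c_proj i => S i
  | c_comp f gs => fold_right max 0 (map wc gs)
  | c_prec f g => S (max (wc f) (wc g - 2))
  | c_mu f => wc f - 1
  end.

Lemma agree_tl k l l' : agree (S k) l l' -> agree k (tl l) (tl l').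
Proof.
  intros A i Hi. specialize (A (S i) ltac:(lia)).
  destruct l, l'; simpl in *; auto; destruct i; auto.
Qed.

Lemma agree_hd k l l' : agree (S k) l l' -> hd 0 l = hd 0 l'.
Proof. intros A. specialize (A 0 ltac:(lia)). destruct l, l'; simpl in *; auto. Qed.

Lemma sr_ext t t' n : (forall j, j < n -> t j = t' j) -> sr t n = sr t' n.
Proof.
  intros H. unfold sr. induction n; simpl; auto. rewrite IHn by (intros; apply H; lia).
  rewrite H by lia. reflexivity.
Qed.

Lemma ev_agree : forall c s l l', agree (wc c) l l' -> ev s c l = ev s c l'.
Proof.
  induction c using code_ind'; intros s l l' A; simpl in *.
  - reflexivity.
  - f_equal. f_equal. apply (agree_hd 0). auto.
  - f_equal. apply A. lia.
  - assert (E : map (fun g => ev s g l) gs = map (fun g => ev s g l') gs).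
    { clear IHc. induction H; simpl in *; auto. f_equal.
      - apply H. eapply agree_mono; [|eassumption]. lia.
      - apply IHForall. eapply agree_mono; [|eassumption]. lia. }
    rewrite E. reflexivity.
  - rewrite (agree_hd _ _ _ A). apply agree_tl in A.
    induction (hd 0 l'); simpl.
    + apply IHc1. eapply agree_mono; [|eassumption]. lia.
    + rewrite IHn. match goal with |- match ?X with _ => _ end = _ => destruct X end; auto. apply IHc2. apply agree_cons2.
      eapply agree_mono; [|eassumption]. lia.
  - f_equal. apply sr_ext. intros. f_equal. apply IHc. apply agree_cons1. auto.
Qed.

Lemma sr_spec t : forall n,
  (sr t n = 0 -> forall y, y < n -> t y >= 2) /\
  (forall v, sr t n = S (S v) -> t v = 1 /\ forall y, y < v -> t y >= 2).
Proof.
  induction n as [|n [IH1 IH2]]; simpl.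
  - split; intros; [lia|discriminate].
  - unfold sr in *. simpl. destruct (nat_rect _ 0 _ n) as [|st] eqn:E.
    + specialize (IH1 eq_refl). unfold mustep.
      destruct (t n) as [|[|w]] eqn:Et; split; intros; try discriminate.
      * inversion H; subst. split; auto.
      * assert (y < n \/ y = n) as [|] by lia; [auto|subst; lia].
    + simpl. split; intros; [discriminate|]. apply IH2. auto.
Qed.

Lemma allsome_sound s l gs ys :
  Forall (fun g => forall s l v, ev s g l = Some v -> eval g l v) gs ->
  allsome (map (fun g => ev s g l) gs) = Some ys -> Forall2 (fun g y => eval g l y) gs ys.
Proof.
  intros H. revert ys. induction H; simpl; intros ys E.
  - inversion E; constructor.
  - destruct (ev s x l) eqn:E1; [|discriminate].
    destruct (allsome _) eqn:E2; [|discriminate]. inversion E; subst.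
    constructor; eauto.
Qed.

Lemma ev_sound : forall c s l v, ev s c l = Some v -> eval c l v.
Proof.
  induction c using code_ind'; intros s l v E; simpl in E.
  - inversion E; constructor.
  - inversion E; constructor.
  - inversion E; constructor.
  - destruct (allsome _) eqn:E1; [|discriminate].
    econstructor. eapply allsome_sound; eauto. eauto.
  - assert (G : forall n r, nat_rect (fun _ => option nat) (ev s c1 (tl l))
       (fun j r => match r with Some r => ev s c2 (j :: r :: tl l) | None => None end) n = Some r ->
       eval (c_prec c1 c2) (n :: tl l) r).
    { induction n; simpl; intros r H.
      - constructor. eauto.
      - destruct (nat_rect _ _ _ n) eqn:E2; [|discriminate].
        econstructor. apply IHn. reflexivity. eauto. }
    destruct l as [|x l]; simpl in *.
    + apply e_prec_nil. apply G. auto.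
    + apply G. auto.
  - unfold mures in E. destruct (sr _ s) as [|[|v']] eqn:E1; try discriminate.
    inversion E; subst.
    destruct (sr_spec (fun j => enc (ev s c (j :: l))) s) as [_ H2].
    destruct (H2 _ E1) as [H3 H4].
    constructor.
    + destruct (ev s c (v :: l)) as [[|w]|] eqn:E3; simpl in H3; try discriminate. eauto.
    + intros y Hy. specialize (H4 y Hy).
      destruct (ev s c (y :: l)) as [[|w]|] eqn:E3; simpl in H4; try lia.
      exists (S w). split; [lia|]. eauto.
Qed.


Lemma collect_bound (P : nat -> nat -> Prop) : forall y,
  (forall y', y' < y -> exists s0, forall s, s0 <= s -> P s y') ->
  exists S0, forall s, S0 <= s -> forall y', y' < y -> P s y'.
Proof.
  induction y; intros H.
  - exists 0. intros; lia.
  - destruct IHy as [S1 H1]. intros; apply H; lia.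
    destruct (H y ltac:(lia)) as [S2 H2].
    exists (max S1 S2). intros s Hs y' Hy.
    assert (y' < y \/ y' = y) as [|] by lia.
    + apply H1; auto; lia.
    + subst. apply H2. lia.
Qed.

Lemma sr_zero t y : (forall j, j < y -> t j >= 2) -> sr t y = 0.
Proof.
  induction y; intros H; simpl; auto. unfold sr in *; simpl. rewrite IHy by (intros; apply H; lia).
  unfold mustep. specialize (H y ltac:(lia)). destruct (t y) as [|[|]]; lia.
Qed.

Lemma sr_found t y : (forall j, j < y -> t j >= 2) -> t y = 1 -> forall k, sr t (S y + k) = S (S y).
Proof.
  intros H1 H2 k. induction k.
  - rewrite Nat.add_0_r. unfold sr; simpl. fold (sr t y). rewrite sr_zero by auto. rewrite H2. reflexivity.
  - rewrite Nat.add_succ_r. change (sr t (S (S y + k))) with (mustep (S y + k) (sr t (S y + k)) (t (S y + k))). rewrite IHk. reflexivity.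
Qed.

Lemma allsome_complete l gs ys :
  Forall2 (fun g y => exists s0, forall s, s0 <= s -> ev s g l = Some y) gs ys ->
  exists S0, forall s, S0 <= s -> allsome (map (fun g => ev s g l) gs) = Some ys.
Proof.
  induction 1.
  - exists 0. reflexivity.
  - destruct H as [s1 H1]. destruct IHForall2 as [s2 H2]. exists (max s1 s2). intros s Hs.
    simpl. rewrite H1 by lia. rewrite H2 by lia. reflexivity.
Qed.

Lemma ev_complete : forall c l v, eval c l v -> exists s0, forall s, s0 <= s -> ev s c l = Some v.
Proof.
  fix IH 4. intros c l v H. destruct H.
  - exists 0; reflexivity.
  - exists 0; reflexivity.
  - exists 0; reflexivity.
  - assert (A : Forall2 (fun g y => exists s0, forall s, s0 <= s -> ev s g l = Some y) gs ys).
    { clear H0. induction H; constructor; [apply IH; assumption | assumption]. }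
    destruct (allsome_complete _ _ _ A) as [s1 H1].
    destruct (IH _ _ _ H0) as [s2 H2].
    exists (max s1 s2). intros s Hs. simpl. rewrite H1 by lia. apply H2. lia.
  - destruct (IH _ _ _ H) as [s1 H1]. exists s1. intros. simpl. apply H1. auto.
  - destruct (IH _ _ _ H) as [s1 H1]. destruct (IH _ _ _ H0) as [s2 H2].
    exists (max s1 s2). intros s Hs. simpl. specialize (H1 s ltac:(lia)). simpl in H1.
    rewrite H1. apply H2. lia.
  - destruct (IH _ _ _ H) as [s1 H1]. exists s1. intros s Hs. specialize (H1 s Hs). exact H1.
  - assert (A : forall y', y' < y -> exists s0, forall s, s0 <= s ->
                  exists w, w <> 0 /\ ev s f (y' :: l) = Some w).
    { intros y' Hy. destruct (H0 y' Hy) as [w [Hw Hev]].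
      destruct (IH _ _ _ Hev) as [s0 Hs0]. exists s0. intros s Hs. exists w. auto. }
    destruct (collect_bound _ _ A) as [s1 H1].
    destruct (IH _ _ _ H) as [s2 H2].
    exists (max (max s1 s2) (S y)). intros s Hs.
    change (ev s (c_mu f) l) with (mures (sr (fun j => enc (ev s f (j :: l))) s)).
    set (t := fun j => enc (ev s f (j :: l))).
    replace (sr t s) with (sr t (S y + (s - S y))) by (f_equal; lia).
    rewrite sr_found.
    + reflexivity.
    + intros j Hj. destruct (H1 s ltac:(lia) j Hj) as [w [Hw E]]. unfold t. rewrite E. simpl. lia.
    + unfold t. rewrite H2 by lia. reflexivity.
Qed.


Definition one := Suc Zro.
Definition isz (e : ex) := Sub one e.
Definition sgn (e : ex) := Sub one (isz e).
Definition sg (x : nat) := 1 - (1 - x).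

Definition SGc := cmp (sgn (Var 0)).
Lemma SGc_ok x : eval SGc [x] (sg x).
Proof. apply (cmp_ok (sgn (Var 0)) [x]). Qed.

Definition mustep_e :=
  Add (Mul (isz (Var 1)) (Add (isz (Var 2)) (Mul (isz (Sub (Var 2) one)) (Mul (sgn (Var 2)) (Suc (Suc (Var 0)))))))
      (Var 1).
Definition MUSTc := cmp mustep_e.
Lemma MUSTc_ok j st t : eval MUSTc [j; st; t] (mustep j st t).
Proof.
  replace (mustep j st t) with (den mustep_e [j; st; t]) by
    (unfold mustep; simpl; destruct st; [destruct t as [|[|t]]|]; simpl; lia).
  apply cmp_ok.
Qed.

Fixpoint mulall (cgs : list code) (base : code) : code :=
  match cgs with [] => base | cg :: r => c_comp MULc [c_comp SGc [cg]; mulall r base] end.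

Fixpoint clk (c : code) : code :=
  match c with
  | c_zero => c_comp c_succ [c_zero]
  | c_succ => c_comp c_succ [c_comp c_succ [c_proj 1]]
  | c_proj i => c_comp c_succ [c_proj (S i)]
  | c_comp f gs => let cgs := map clk gs in
      mulall cgs (c_comp (clk f) (c_proj 0 :: map (fun cg => c_comp PREDc [cg]) cgs))
  | c_prec f g => let W := max (wc f) (wc g - 2) in
      c_comp (c_prec (clk f)
        (c_comp MULc [c_comp SGc [c_proj 1];
                      c_comp (clk g) (c_proj 2 :: c_proj 0 :: c_comp PREDc [c_proj 1] :: projs 3 W)]))
       (c_proj 1 :: c_proj 0 :: projs 2 W)
  | c_mu f => let W := wc f - 1 in
      c_comp PREDc [c_comp (c_prec c_zero
        (c_comp MUSTc [c_proj 0; c_proj 1; c_comp (clk f) (c_proj 2 :: c_proj 0 :: projs 3 W)]))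
        (c_proj 0 :: c_proj 0 :: projs 1 W)]
  end.

Definition prodsg (os : list (option nat)) : nat := fold_right (fun o acc => sg (enc o) * acc) 1 os.

Lemma allsome_some os ys : allsome os = Some ys -> map (fun o => pred (enc o)) os = ys /\ prodsg os = 1.
Proof.
  revert ys; induction os as [|o os IH]; simpl; intros ys E.
  - inversion E; auto.
  - destruct o as [v|]; [|discriminate]. destruct (allsome os) as [vs|]; [|discriminate].
    inversion E; subst. destruct (IH vs eq_refl) as [-> ->]. auto.
Qed.

Lemma allsome_none os : allsome os = None -> prodsg os = 0.
Proof.
  induction os as [|o os IH]; simpl; intros E; [discriminate|].
  destruct o as [v|]; simpl; [|reflexivity].
  destruct (allsome os); [discriminate|]. rewrite IH by auto. lia.
Qed.

Lemma agree_padl_shift k W l l' : (forall i, i < W -> nth (i + k) l 0 = nth i l' 0) -> agree W (padl k W l) l'.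
Proof. intros H i Hi. rewrite padl_nth by lia. apply H. auto. Qed.

Lemma agree_sym k l l' : agree k l l' -> agree k l' l.
Proof. intros A i Hi. symmetry. auto. Qed.

Lemma succ_ok x : eval c_succ [x] (S x). Proof. exact (e_succ [x]). Qed.
Lemma proj_ok i l v : nth i l 0 = v -> eval (c_proj i) l v. Proof. intros <-. constructor. Qed.
Lemma comp1 f g l a z : eval g l a -> eval f [a] z -> eval (c_comp f [g]) l z.
Proof. intros. econstructor; eauto. Qed.
Lemma comp2 f g1 g2 l a b z : eval g1 l a -> eval g2 l b -> eval f [a; b] z -> eval (c_comp f [g1; g2]) l z.
Proof. intros. econstructor; eauto. Qed.
Lemma comp3 f g1 g2 g3 l a b c z : eval g1 l a -> eval g2 l b -> eval g3 l c -> eval f [a; b; c] z ->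
  eval (c_comp f [g1; g2; g3]) l z.
Proof. intros. econstructor; eauto. Qed.
Lemma MULc_ok2 a b : eval MULc [a; b] (a * b). Proof. apply (MULc_ok [a; b]). Qed.
Lemma PREDc_ok1 a : eval PREDc [a] (pred a). Proof. apply (PREDc_ok [a]). Qed.

Lemma prec_eval' f g a (G : nat -> nat -> nat) n l : eval f l a -> (forall j r, eval g (j :: r :: l) (G j r)) ->
  eval (c_prec f g) (n :: l) (nat_rect (fun _ => nat) a G n).
Proof.
  intros Hf Hg. induction n; simpl.
  - constructor. auto.
  - eapply e_precS. apply IHn. apply Hg.
Qed.

Lemma enc_mures x : enc (mures x) = pred x.
Proof. destruct x as [|[|x]]; reflexivity. Qed.

Lemma mulall_ok (f : code) gs s l base bv :
  Forall (fun c => forall s l, eval (clk c) (s :: l) (enc (ev s c l))) gs ->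
  eval base (s :: l) bv ->
  eval (mulall (map clk gs) base) (s :: l) (prodsg (map (fun g => ev s g l) gs) * bv).
Proof.
  intros H Hb. induction H; simpl.
  - rewrite Nat.add_0_r. auto.
  - rewrite <- Nat.mul_assoc. apply comp2 with (sg (enc (ev s x l))) (prodsg (map (fun g => ev s g l) l0) * bv).
    + apply comp1 with (enc (ev s x l)). apply H. apply SGc_ok.
    + apply IHForall.
    + apply MULc_ok2.
Qed.

Lemma clk_ok : forall c s l, eval (clk c) (s :: l) (enc (ev s c l)).
Proof.
  induction c using code_ind'; intros s l.
  - simpl. apply comp1 with 0. constructor. apply succ_ok.
  - simpl. apply comp1 with (S (hd 0 l)). apply comp1 with (hd 0 l). apply proj_ok. destruct l; reflexivity.
    apply succ_ok. apply succ_ok.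
  - simpl. apply comp1 with (nth i l 0). apply proj_ok; reflexivity. apply succ_ok.
  -
    rename c into f.
    cbn [clk ev].
    set (os := map (fun g => ev s g l) gs).
    assert (Hbase : eval (c_comp (clk f) (c_proj 0 :: map (fun cg => c_comp PREDc [cg]) (map clk gs))) (s :: l)
                     (enc (ev s f (map (fun o => pred (enc o)) os)))).
    { econstructor; [|apply IHc]. constructor. constructor.
      unfold os. clear IHc. induction H; simpl; constructor; auto.
      apply comp1 with (enc (ev s x l)). apply H. apply PREDc_ok1. }
    assert (Hm := mulall_ok f gs s l _ _ H Hbase). fold os in Hm.
    fold os. destruct (allsome os) as [ys|] eqn:E.
    + destruct (allsome_some _ _ E) as [E1 E2]. rewrite E1, E2, Nat.mul_1_l in Hm. exact Hm.
    + rewrite (allsome_none _ E) in Hm. exact Hm.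
  -
    cbn [clk ev]. set (W := max (wc c1) (wc c2 - 2)).
    eapply e_comp. constructor. constructor. constructor. constructor. apply projs_ok.
    set (L := padl 2 W (s :: l)).
    assert (AL : agree W L (tl l)).
    { apply agree_padl_shift. intros i Hi. replace (i + 2) with (S (S i)) by lia. destruct l, i; reflexivity. }
    assert (AL' : forall j r, agree W (padl 3 W (j :: r :: s :: L)) (tl l)).
    { intros j r. apply agree_padl_shift. intros i Hi. replace (i + 3) with (S (S (S i))) by lia. simpl. apply AL; auto. }
    assert (Hv : enc (nat_rect (fun _ => option nat) (ev s c1 (tl l))
       (fun j r => match r with Some r => ev s c2 (j :: r :: tl l) | None => None end) (hd 0 l)) =
       nat_rect (fun _ => nat) (enc (ev s c1 L))
         (fun j r => sg r * enc (ev s c2 (j :: pred r :: padl 3 W (j :: r :: s :: L)))) (hd 0 l)).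
    { induction (hd 0 l); simpl.
      - f_equal. apply ev_agree. eapply agree_mono; [|apply agree_sym; exact AL]. unfold W; lia.
      - rewrite <- IHn. destruct (nat_rect _ _ _ n) as [r|]; simpl; [|reflexivity].
        unfold sg; simpl. rewrite Nat.add_0_r. f_equal. apply ev_agree. apply agree_cons2.
        eapply agree_mono; [|apply agree_sym; apply AL']. unfold W; lia. }
    replace (nth 1 (s :: l) 0) with (hd 0 l) by (destruct l; reflexivity). change (nth 0 (s :: l) 0) with s.
    rewrite Hv. apply prec_eval'.
    + apply IHc1.
    + intros j r. apply comp2 with (sg r) (enc (ev s c2 (j :: pred r :: padl 3 W (j :: r :: s :: L)))).
      * apply comp1 with r. constructor. apply SGc_ok.
      * eapply e_comp. constructor. constructor. constructor. constructor.
        constructor. apply comp1 with r. constructor. apply PREDc_ok1. apply projs_ok. apply IHc2.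
      * apply MULc_ok2.
  -
    cbn [clk ev]. set (W := wc c - 1). rewrite enc_mures.
    apply comp1 with (sr (fun j => enc (ev s c (j :: l))) s); [|apply PREDc_ok1].
    eapply e_comp. constructor. constructor. constructor. constructor. apply projs_ok.
    set (L := padl 1 W (s :: l)).
    change (nth 0 (s :: l) 0) with s. fold L.
    assert (AL' : forall j r, agree W (padl 3 W (j :: r :: s :: L)) l).
    { intros j r. apply agree_padl_shift. intros i Hi. replace (i + 3) with (S (S (S i))) by lia. simpl.
      unfold L. rewrite padl_nth by auto. rewrite Nat.add_comm. reflexivity. }
    replace (sr (fun j => enc (ev s c (j :: l))) s) with
      (nat_rect (fun _ => nat) 0 (fun j st => mustep j st (enc (ev s c (j :: padl 3 W (j :: st :: s :: L))))) s).
    + apply prec_eval'. constructor. intros j st.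
      apply comp3 with j st (enc (ev s c (j :: padl 3 W (j :: st :: s :: L)))).
      * constructor.
      * constructor.
      * eapply e_comp. constructor. constructor. constructor. constructor. apply projs_ok. apply IHc.
      * apply MUSTc_ok.
    + unfold sr. apply nat_rect_ext; auto. intros j st. f_equal. f_equal. apply ev_agree.
      apply agree_cons1. apply AL'.
Qed.


Definition app1 f a := App f (ECons a ENil).
Definition app2 f a b := App f (ECons a (ECons b ENil)).
Definition app3 f a b c := App f (ECons a (ECons b (ECons c ENil))).
Definition le_e a b := isz (Sub a b).
Definition lt_e a b := sgn (Sub b a).

Definition tri (d : nat) : nat := nat_rect (fun _ => nat) 0 (fun j r => S j + r) d.
Definition TRI := Rec (Var 0) Zro (Add (Suc (Var 0)) (Var 1)).
Lemma den_TRI d : den TRI [d] = tri d. Proof. reflexivity. Qed.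

Definition PAIR := Add (Var 1) (app1 TRI (Add (Var 1) (Var 0))).
Lemma den_PAIR x y : den PAIR [x; y] = to_nat (x, y). Proof. reflexivity. Qed.

Definition cd (n : nat) : nat :=
  nat_rect (fun _ => nat) 0 (fun j r => r + (1 - (tri (S j) - n))) (S n).
Definition CD := Rec (Suc (Var 0)) Zro (Add (Var 1) (le_e (app1 TRI (Suc (Var 0))) (Var 2))).
Lemma den_CD n : den CD [n] = cd n. Proof. reflexivity. Qed.

Definition p2 (n : nat) := n - tri (cd n).
Definition p1 (n : nat) := cd n - p2 n.
Definition P2 := Sub (Var 0) (app1 TRI (app1 CD (Var 0))).
Definition P1 := Sub (app1 CD (Var 0)) (app1 P2 (Var 0)).
Lemma den_P2 n : den P2 [n] = p2 n. Proof. reflexivity. Qed.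
Lemma den_P1 n : den P1 [n] = p1 n. Proof. reflexivity. Qed.

Lemma tri_S d : tri (S d) = S d + tri d. Proof. reflexivity. Qed.
Lemma tri_mono a b : a <= b -> tri a <= tri b.
Proof. induction 1; auto. rewrite tri_S. lia. Qed.
Lemma tri_ge d : d <= tri d.
Proof. induction d; auto. rewrite tri_S. lia. Qed.

Lemma count_lt d m :
  nat_rect (fun _ => nat) 0 (fun j r => r + (if j <? d then 1 else 0)) m = min m d.
Proof.
  induction m; [simpl; auto|]. cbn [nat_rect]. rewrite IHm. destruct (m <? d) eqn:E; [apply Nat.ltb_lt in E | apply Nat.ltb_ge in E]; lia.
Qed.

Lemma to_nat_tri x y : to_nat (x, y) = y + tri (y + x). Proof. reflexivity. Qed.

Lemma p12_to x y : p1 (to_nat (x, y)) = x /\ p2 (to_nat (x, y)) = y.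
Proof.
  set (n := to_nat (x, y)). set (d := y + x).
  assert (En : n = y + tri d) by reflexivity.
  assert (Hcd : cd n = min (S n) d).
  { unfold cd. rewrite <- (count_lt d (S n)).
    - apply nat_rect_ext; auto. intros j r. f_equal.
      destruct (j <? d) eqn:E; [apply Nat.ltb_lt in E | apply Nat.ltb_ge in E].
      + assert (tri (S j) <= tri d) by (apply tri_mono; lia). lia.
      + assert (HH : tri (S d) <= tri (S j)) by (apply tri_mono; lia). rewrite tri_S in HH. lia. }
  assert (d <= n) by (pose proof (tri_ge d); lia).
  rewrite Nat.min_r in Hcd by lia.
  unfold p1, p2. rewrite Hcd. split; lia.
Qed.

Lemma p1_of n : p1 n = fst (of_nat n).
Proof. rewrite <- (cancel_to_of n). destruct (of_nat n) as [x y]. rewrite cancel_of_to. apply p12_to. Qed.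
Lemma p2_of n : p2 n = snd (of_nat n).
Proof. rewrite <- (cancel_to_of n). destruct (of_nat n) as [x y]. rewrite cancel_of_to. apply p12_to. Qed.


Definition iterp2 (i r : nat) := nat_rect (fun _ => nat) r (fun j acc => p2 acc) i.
Definition ITER := Rec (Var 0) (Var 1) (app1 P2 (Var 1)).
Lemma den_ITER i r : den ITER [i; r] = iterp2 i r. Proof. reflexivity. Qed.

Definition lnth (c i : nat) := (1 - (1 - (p1 c - i))) * p1 (iterp2 i (p2 c)).
Definition LNTH := Mul (lt_e (Var 1) (app1 P1 (Var 0))) (app1 P1 (app2 ITER (Var 1) (app1 P2 (Var 0)))).
Lemma den_LNTH c i : den LNTH [c; i] = lnth c i. Proof. reflexivity. Qed.

Definition powr (a b : nat) := nat_rect (fun _ => nat) 1 (fun j r => r * a) b.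
Definition POW := Rec (Var 1) one (Mul (Var 1) (Var 2)).
Lemma den_POW a b : den POW [a; b] = powr a b. Proof. reflexivity. Qed.

Definition mvn (mc k : nat) := nat_rect (fun _ => nat) 1 (fun j r => r * powr (lnth k j) (lnth (p2 mc) j)) (p1 k).
Definition MV := Rec (app1 P1 (Var 1)) one
   (Mul (Var 1) (app2 POW (app2 LNTH (Var 3) (Var 0)) (app2 LNTH (app1 P2 (Var 2)) (Var 0)))).
Lemma den_MV mc k : den MV [mc; k] = mvn mc k.
Proof. unfold MV, app1, app2. cbn [den dens nth]. rewrite den_P1. apply nat_rect_ext; [reflexivity|]. intros j r. cbn [den dens nth]. rewrite den_LNTH, den_P2, den_LNTH, den_POW. reflexivity. Qed.

Definition TP (k mc : nat) := (1 - p1 (p1 mc)) * p2 (p1 mc) * mvn mc k.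
Definition TN (k mc : nat) := (1 - (1 - p1 (p1 mc))) * p2 (p1 mc) * mvn mc k.
Definition MCJ := app2 LNTH (app1 P2 (Var 0)) (Var 2).
Definition TPOS := Mul (Mul (isz (app1 P1 (app1 P1 MCJ))) (app1 P2 (app1 P1 MCJ))) (app2 MV MCJ (Var 1)).
Definition TNEG := Mul (Mul (sgn (app1 P1 (app1 P1 MCJ))) (app1 P2 (app1 P1 MCJ))) (app2 MV MCJ (Var 1)).
Lemma den_TPOS n k j : den TPOS [n; k; j] = TP k (lnth (p2 n) j).
Proof. unfold TPOS, MCJ, isz, one, app1, app2. cbn [den dens nth]. rewrite ?den_P2, ?den_LNTH, ?den_P1, ?den_P2, ?den_MV. reflexivity. Qed.
Lemma den_TNEG n k j : den TNEG [n; k; j] = TN k (lnth (p2 n) j).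
Proof. unfold TNEG, MCJ, sgn, isz, one, app1, app2. cbn [den dens nth]. rewrite ?den_P2, ?den_LNTH, ?den_P1, ?den_P2, ?den_MV. reflexivity. Qed.

Definition posn n k := nat_rect (fun _ => nat) 0 (fun j r => r + TP k (lnth (p2 n) j)) (p1 (p2 n)).
Definition negn n k := nat_rect (fun _ => nat) 0 (fun j r => r + TN k (lnth (p2 n) j)) (p1 (p2 n)).
Definition POS := Rec (app1 P1 (app1 P2 (Var 0))) Zro (Add (Var 1) (app3 TPOS (Var 2) (Var 3) (Var 0))).
Definition NEG := Rec (app1 P1 (app1 P2 (Var 0))) Zro (Add (Var 1) (app3 TNEG (Var 2) (Var 3) (Var 0))).
Lemma den_POS n k : den POS [n; k] = posn n k.
Proof. unfold POS, app1, app3. cbn [den dens nth]. rewrite den_P2, den_P1. apply nat_rect_ext; [reflexivity|]. intros j r. cbn [den dens nth]. rewrite den_TPOS. reflexivity. Qed.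
Lemma den_NEG n k : den NEG [n; k] = negn n k.
Proof. unfold NEG, app1, app3. cbn [den dens nth]. rewrite den_P2, den_P1. apply nat_rect_ext; [reflexivity|]. intros j r. cbn [den dens nth]. rewrite den_TNEG. reflexivity. Qed.

Definition absd a b := Add (Sub a b) (Sub b a).
Definition chk n k := ((p1 k - p1 n) + (p1 n - p1 k)) + ((posn n k - negn n k) + (negn n k - posn n k)).
Definition CHK := Add (absd (app1 P1 (Var 1)) (app1 P1 (Var 0)))
                      (absd (app2 POS (Var 0) (Var 1)) (app2 NEG (Var 0) (Var 1))).
Lemma den_CHK n k : den CHK [n; k] = chk n k.
Proof. unfold CHK, absd, app1, app2. cbn [den dens nth]. rewrite !den_P1, !den_POS, !den_NEG. reflexivity. Qed.


Lemma iterp2_S i r : iterp2 (S i) r = iterp2 i (p2 r).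
Proof. induction i; [reflexivity|]. change (p2 (iterp2 (S i) r) = p2 (iterp2 i (p2 r))). rewrite IHi. reflexivity. Qed.

Lemma of_nat_p c : of_nat c = (p1 c, p2 c).
Proof. rewrite p1_of, p2_of. destruct (of_nat c); reflexivity. Qed.

Lemma aux_nth len : forall r i, nth i (decode_list_aux len r) 0 = if i <? len then p1 (iterp2 i r) else 0.
Proof.
  induction len; intros r i; simpl.
  - destruct i; reflexivity.
  - rewrite of_nat_p. destruct i; simpl; auto.
    rewrite IHlen. change (p2 (iterp2 i r)) with (iterp2 (S i) r). rewrite iterp2_S. reflexivity.
Qed.

Lemma aux_len len : forall r, length (decode_list_aux len r) = len.
Proof. induction len; intros r; simpl; auto. rewrite of_nat_p. simpl. auto. Qed.

Lemma decode_list_eq c : decode_list c = decode_list_aux (p1 c) (p2 c).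
Proof. unfold decode_list. rewrite of_nat_p. reflexivity. Qed.

Lemma decode_list_len c : length (decode_list c) = p1 c.
Proof. rewrite decode_list_eq. apply aux_len. Qed.

Lemma lnth_nth c i : lnth c i = nth i (decode_list c) 0.
Proof.
  rewrite decode_list_eq, aux_nth. unfold lnth.
  destruct (i <? p1 c) eqn:E; [apply Nat.ltb_lt in E | apply Nat.ltb_ge in E].
  - replace (1 - (1 - (p1 c - i))) with 1 by lia. lia.
  - replace (p1 c - i) with 0 by lia. reflexivity.
Qed.

Lemma powr_pow a b : powr a b = a ^ b.
Proof. induction b; simpl; auto. unfold powr in *. simpl. rewrite IHb. lia. Qed.

Lemma prod_shift (g : nat -> nat) m :
  nat_rect (fun _ => nat) 1 (fun j r => r * g j) (S m) = g 0 * nat_rect (fun _ => nat) 1 (fun j r => r * g (S j)) m.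
Proof. induction m; simpl in *; [lia|]. rewrite IHm. lia. Qed.

Lemma sum_shift (g : nat -> nat) m :
  nat_rect (fun _ => nat) 0 (fun j r => r + g j) (S m) = g 0 + nat_rect (fun _ => nat) 0 (fun j r => r + g (S j)) m.
Proof. induction m; simpl in *; [lia|]. rewrite IHm. lia. Qed.

Lemma mono_val_eq x : forall e,
  mono_val e x = Z.of_nat (nat_rect (fun _ => nat) 1 (fun j r => r * (nth j x 0 ^ nth j e 0)) (length x)).
Proof.
  induction x as [|a x IH]; intros e.
  - reflexivity.
  - cbn [mono_val length]. rewrite prod_shift. rewrite Nat2Z.inj_mul, Nat2Z.inj_pow. rewrite IH.
    f_equal.
    + destruct e; reflexivity.
    + f_equal. apply nat_rect_ext; auto. intros j r. f_equal. f_equal. destruct e; simpl; auto. destruct j; auto.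
Qed.

Lemma mvn_eq mc k : Z.of_nat (mvn mc k) = mono_val (decode_list (p2 mc)) (decode_list k).
Proof.
  rewrite mono_val_eq. f_equal. unfold mvn. rewrite decode_list_len.
  apply nat_rect_ext; auto. intros j r. rewrite powr_pow, !lnth_nth. reflexivity.
Qed.

Lemma decode_mono_eq mc : decode_mono mc = (decode_Z (p1 mc), decode_list (p2 mc)).
Proof. unfold decode_mono. rewrite of_nat_p. reflexivity. Qed.

Lemma decode_Z_eq a : decode_Z a = if p1 a =? 0 then Z.of_nat (p2 a) else (- Z.of_nat (p2 a))%Z.
Proof. unfold decode_Z. rewrite of_nat_p. destruct (p1 a); reflexivity. Qed.

Lemma term_eq k mc : (fst (decode_mono mc) * mono_val (snd (decode_mono mc)) (decode_list k))%Z =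
   (Z.of_nat (TP k mc) - Z.of_nat (TN k mc))%Z.
Proof.
  rewrite decode_mono_eq. simpl. rewrite <- mvn_eq. rewrite decode_Z_eq. unfold TP, TN.
  destruct (p1 (p1 mc)) eqn:E; simpl.
  - rewrite !Nat.add_0_r. lia.
  - lia.
Qed.

Lemma fold_sum (g : nat -> nat) L :
  fold_right (fun a acc => g a + acc) 0 L = nat_rect (fun _ => nat) 0 (fun j r => r + g (nth j L 0)) (length L).
Proof.
  induction L; [reflexivity|]. cbn [fold_right length].
  rewrite sum_shift. rewrite IHL. reflexivity.
Qed.

Lemma decode_eq_eq n : decode_eq n = mkDioph (p1 n) (map decode_mono (decode_list (p2 n))).
Proof. unfold decode_eq. rewrite of_nat_p. reflexivity. Qed.

Lemma poly_eq n k : poly_val (decode_eq n) (decode_list k) = (Z.of_nat (posn n k) - Z.of_nat (negn n k))%Z.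
Proof.
  rewrite decode_eq_eq. unfold poly_val. simpl.
  assert (G : forall L, fold_right (fun m acc => (fst m * mono_val (snd m) (decode_list k) + acc)%Z) 0%Z (map decode_mono L)
     = (Z.of_nat (fold_right (fun a acc => (TP k a + acc)%nat) 0%nat L) - Z.of_nat (fold_right (fun a acc => (TN k a + acc)%nat) 0%nat L))%Z).
  { induction L; simpl; auto. rewrite IHL, term_eq. lia. }
  rewrite G, !fold_sum. unfold posn, negn. rewrite decode_list_len.
  f_equal; f_equal; apply nat_rect_ext; auto; intros; rewrite lnth_nth; reflexivity.
Qed.

Lemma chk_spec n k : chk n k = 0 <-> is_solution (decode_eq n) (decode_list k).
Proof.
  unfold is_solution. rewrite poly_eq, decode_list_len. rewrite decode_eq_eq. simpl. unfold chk. lia.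
Qed.

Fixpoint enc_aux (x : list nat) : nat := match x with [] => 0 | a :: x' => to_nat (a, enc_aux x') end.
Lemma decode_surj x : exists k, decode_list k = x.
Proof.
  exists (to_nat (length x, enc_aux x)). unfold decode_list. rewrite cancel_of_to.
  induction x; [reflexivity|]. cbn [length enc_aux decode_list_aux]. rewrite cancel_of_to. rewrite IHx. reflexivity.
Qed.


Definition newmc (mc : nat) := to_nat (p1 mc, to_nat (S (p1 (p2 mc)), to_nat (0, p2 (p2 mc)))).
Definition NEWMC := app2 PAIR (app1 P1 (Var 0))
   (app2 PAIR (Suc (app1 P1 (app1 P2 (Var 0)))) (app2 PAIR Zro (app1 P2 (app1 P2 (Var 0))))).
Lemma den_NEWMC mc : den NEWMC [mc] = newmc mc.
Proof. unfold NEWMC, app1, app2. cbn [den dens nth]. rewrite ?den_P1, ?den_P2, ?den_P1, ?den_PAIR, ?den_PAIR. reflexivity. Qed.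

Definition accn (n : nat) := nat_rect (fun _ => nat) 0
   (fun j r => to_nat (newmc (lnth (p2 n) (p1 (p2 n) - 1 - j)), r)) (p1 (p2 n)).
Definition ACC := Rec (app1 P1 (app1 P2 (Var 0))) Zro
   (app2 PAIR (app1 NEWMC (app2 LNTH (app1 P2 (Var 2)) (Sub (Sub (app1 P1 (app1 P2 (Var 2))) one) (Var 0)))) (Var 1)).
Lemma den_ACC n : den ACC [n] = accn n.
Proof.
  unfold ACC, app1, app2. cbn [den dens nth]. rewrite den_P2, den_P1. apply nat_rect_ext; [reflexivity|].
  intros j r. unfold one. cbn [den dens nth]. rewrite ?den_P2, ?den_P1, den_LNTH, den_NEWMC, den_PAIR. reflexivity.
Qed.

Definition gn (n : nat) := to_nat (S (p1 n), to_nat (p1 (p2 n), accn n)).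
Definition GF := app2 PAIR (Suc (app1 P1 (Var 0))) (app2 PAIR (app1 P1 (app1 P2 (Var 0))) (app1 ACC (Var 0))).
Lemma den_GF n : den GF [n] = gn n.
Proof. unfold GF, app1, app2. cbn [den dens nth]. rewrite ?den_P2, ?den_P1, den_ACC, !den_PAIR. reflexivity. Qed.

Lemma p1_pair x y : p1 (to_nat (x, y)) = x. Proof. apply p12_to. Qed.
Lemma p2_pair x y : p2 (to_nat (x, y)) = y. Proof. apply p12_to. Qed.

Lemma decode_mono_new mc : decode_mono (newmc mc) = (fst (decode_mono mc), 0 :: snd (decode_mono mc)).
Proof.
  rewrite !decode_mono_eq. unfold newmc. rewrite p1_pair, p2_pair. cbn [fst snd]. f_equal.
  rewrite (decode_list_eq (p2 mc)). unfold decode_list at 1. rewrite cancel_of_to. cbn [decode_list_aux].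
  rewrite cancel_of_to. reflexivity.
Qed.

Lemma acc_lemma ml M : forall t, t <= M ->
  decode_list_aux t (nat_rect (fun _ => nat) 0 (fun j r => to_nat (newmc (lnth ml (M - 1 - j)), r)) t)
  = map (fun j => newmc (lnth ml j)) (seq (M - t) t).
Proof.
  induction t; intros Ht; [reflexivity|].
  cbn [nat_rect decode_list_aux]. rewrite cancel_of_to. rewrite IHt by lia.
  replace (M - S t) with (M - 1 - t) by lia. simpl. f_equal. f_equal. f_equal. lia.
Qed.

Lemma list_as_map (L : list nat) : L = map (fun j => nth j L 0) (seq 0 (length L)).
Proof.
  induction L; simpl; auto. f_equal. rewrite <- seq_shift, map_map. simpl. exact IHL.
Qed.

Lemma decode_eq_gn n : decode_eq (gn n) =
  mkDioph (S (p1 n)) (map (fun m => (fst m, 0 :: snd m)) (map decode_mono (decode_list (p2 n)))).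
Proof.
  rewrite decode_eq_eq. unfold gn. rewrite p1_pair, p2_pair. f_equal.
  unfold decode_list at 1. rewrite cancel_of_to. unfold accn.
  rewrite acc_lemma by lia. rewrite Nat.sub_diag.
  rewrite (list_as_map (decode_list (p2 n))) at 1. rewrite decode_list_len.
  rewrite !map_map. apply map_ext. intros j. rewrite decode_mono_new, lnth_nth. reflexivity.
Qed.

Lemma poly_shift m m' monos y x :
  poly_val (mkDioph m (map (fun mo => (fst mo, 0 :: snd mo)) monos)) (y :: x) = poly_val (mkDioph m' monos) x.
Proof.
  unfold poly_val. simpl. induction monos; simpl; auto. rewrite IHmonos. f_equal. f_equal. destruct (mono_val (snd a) x); reflexivity.
Qed.

Lemma sol_gn n x : is_solution (decode_eq (gn n)) x <->
   exists y x', x = y :: x' /\ is_solution (decode_eq n) x'.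
Proof.
  rewrite decode_eq_gn. unfold is_solution. rewrite (decode_eq_eq n). simpl. split.
  - intros [H1 H2]. destruct x as [|y x']; simpl in H1; [discriminate|].
    exists y, x'. split; auto. split; [lia|]. rewrite <- H2. symmetry. apply poly_shift.
  - intros [y [x' [-> [H1 H2]]]]. split; simpl; [lia|]. rewrite (poly_shift _ (p1 n)). auto.
Qed.

Lemma fin_gn n : finitely_many_solutions (decode_eq (gn n)) <-> ~ has_solution (decode_eq n).
Proof.
  split.
  - intros [L HL] [x Hx].
    set (y := S (list_max (map (hd 0) L))).
    assert (Hin : In (y :: x) L) by (apply HL; apply sol_gn; eauto).
    assert (Hle : hd 0 (y :: x) <= list_max (map (hd 0) L)).
    { assert (F := proj1 (list_max_le (map (hd 0) L) _) (le_n _)).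
      rewrite Forall_forall in F. apply F. apply in_map. auto. }
    simpl in Hle. unfold y in Hle. lia.
  - intros Hn. exists []. intros x Hx. apply sol_gn in Hx. destruct Hx as [y [x' [_ Hx']]].
    exfalso. apply Hn. exists x'. auto.
Qed.


Lemma least_zero (f : nat -> nat) : forall n, f n = 0 -> exists s, f s = 0 /\ forall y, y < s -> f y <> 0.
Proof.
  intros n. induction n as [n IH] using (well_founded_induction lt_wf). intros Hn.
  destruct (classic (exists y, y < n /\ f y = 0)) as [[y [Hy Hf]]|Hno].
  - apply (IH y Hy Hf).
  - exists n. split; auto. intros y Hy Hf. apply Hno. eauto.
Qed.

Definition CHKc := cmp CHK.
Definition GC := cmp GF.
Definition ISZc := cmp (isz (Var 0)).

Lemma CHKc_ok n k : eval CHKc [n; k] (chk n k).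
Proof. rewrite <- den_CHK. apply cmp_ok. Qed.
Lemma GC_ok n : eval GC [n] (gn n).
Proof. rewrite <- den_GF. apply cmp_ok. Qed.
Lemma ISZc_ok x : eval ISZc [x] (1 - x).
Proof. apply (cmp_ok (isz (Var 0)) [x]). Qed.

Definition BODY (cF : code) :=
  c_comp MULc [c_comp CHKc [c_proj 1; c_proj 0];
               c_comp ISZc [c_comp (clk cF) [c_proj 0; c_comp GC [c_proj 1]]]].
Definition bval cF n s := chk n s * (1 - enc (ev s cF [gn n])).

Lemma BODY_ok cF n s : eval (BODY cF) [s; n] (bval cF n s).
Proof.
  unfold BODY, bval. apply comp2 with (chk n s) (1 - enc (ev s cF [gn n])).
  - apply comp2 with n s. constructor. constructor. apply CHKc_ok.
  - apply comp1 with (enc (ev s cF [gn n])); [|apply ISZc_ok].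
    apply comp2 with s (gn n). constructor. apply comp1 with n. constructor. apply GC_ok. apply clk_ok.
  - apply MULc_ok2.
Qed.

Definition DEC cF := c_comp ISZc [c_comp CHKc [c_proj 0; c_mu (BODY cF)]].

Theorem re_fin_rec :
  recursively_enumerable (fun c => finitely_many_solutions (decode_eq c)) ->
  recursive (fun c => has_solution (decode_eq c)).
Proof.
  intros [cF HcF]. exists (DEC cF). intros n.
  assert (Hex : exists s, bval cF n s = 0).
  { destruct (classic (has_solution (decode_eq n))) as [[x Hx]|Hn].
    - destruct (decode_surj x) as [k Hk]. exists k. unfold bval.
      replace (chk n k) with 0; [reflexivity|]. symmetry. apply chk_spec. rewrite Hk. auto.
    - apply fin_gn in Hn. apply HcF in Hn. destruct Hn as [y Hy].
      destruct (ev_complete _ _ _ Hy) as [s0 Hs0]. exists s0. unfold bval. rewrite Hs0 by lia.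
      simpl. lia. }
  destruct Hex as [s1 Hs1]. destruct (least_zero _ s1 Hs1) as [s [Hs Hless]].
  assert (Hmu : eval (c_mu (BODY cF)) [n] s).
  { constructor.
    - rewrite <- Hs. apply BODY_ok.
    - intros y Hy. exists (bval cF n y). split. apply Hless; auto. apply BODY_ok. }
  assert (Hout : eval (DEC cF) [n] (1 - chk n s)).
  { unfold DEC. apply comp1 with (chk n s); [|apply ISZc_ok].
    apply comp2 with n s. constructor. exact Hmu. apply CHKc_ok. }
  split.
  - intros HS.
    assert (Hnone : forall t, ev t cF [gn n] = None).
    { intros t. destruct (ev t cF [gn n]) as [y|] eqn:E; auto. exfalso.
      apply ev_sound in E. assert (Hf : finitely_many_solutions (decode_eq (gn n))) by (apply HcF; eauto).
      apply fin_gn in Hf. auto. }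
    unfold bval in Hs. rewrite Hnone in Hs. simpl in Hs. rewrite Nat.mul_1_r in Hs.
    rewrite Hs in Hout. exact Hout.
  - intros HnS.
    assert (Hc : chk n s <> 0).
    { intros Hc. apply chk_spec in Hc. apply HnS. eexists; eauto. }
    replace 0 with (1 - chk n s) by lia. exact Hout.
Qed.

Theorem mainTheorem12 :
  ~ recursive (fun c => has_solution (decode_eq c)) ->
  ~ recursively_enumerable (fun c => finitely_many_solutions (decode_eq c)).
Proof. intros H1 H2. apply H1. apply re_fin_rec. exact H2. Qed.
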